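(* For positive integers $n,r,k$ with $n\ge 2(k+r)$, $$\gamma_k(K(n,r))\ \ge\ \gamma_k(K(n+1,r)).$$
   Context: For integers $n\ge 2r$, the Kneser graph $K(n,r)$ has as vertices the $r$-element subsets of $[n]=\{1,\dots,n\}$, two vertices being adjacent iff they are disjoint. For a graph $G$ and positive integer $k$, a set $D\subseteq V(G)$ is $k$-dominating if every vertex $u\in V(G)\setminus D$ has at least $k$ neighbors in $D$; $\gamma_k(G)$ is the minimum cardinality of a $k$-dominating set. *)

(* Defs.v *)
From HB Require Import structures.
From mathcomp Require Import all_boot.
Set Implicit Arguments. Unset Strict Implicit. Unset Printing Implicit Defensive.

Definition kneser_vertex (n r : nat) : Type :=
  {A : {set 'I_n} | #|A| == r}.

Definition kneser_adj (n r : nat) : rel (kneser_vertex n r) :=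
  fun A B => [disjoint val A & val B].

Definition k_dominating (T : finType) (e : rel T) (k : nat) (D : {set T}) : bool :=
  [forall u, (u \notin D) ==> (k <= #|[set v in D | e u v]|)].

(* gamma_k : minimum cardinality of a k-dominating set (the full vertex set
   is always k-dominating, so the minimum exists). *)
Definition gamma_k (T : finType) (e : rel T) (k : nat) : nat :=
  #|[arg min_(D < [set: T] | k_dominating e k D) #|D|]|.

(* Main.v *)
Require Import Defs.
From mathcomp Require Import all_boot zify.
Set Implicit Arguments. Unset Strict Implicit. Unset Printing Implicit Defensive.

Lemma gammaP (T : finType) (e : rel T) (k : nat) :
  exists D, [/\ k_dominating e k D, gamma_k e k = #|D| &
     forall D', k_dominating e k D' -> #|D| <= #|D'|].
Proof.
have hT : k_dominating e k [set: T].
  by apply/forallP => u; rewrite in_setT.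
rewrite /gamma_k; case: arg_minnP => // D hD hmin.
by exists D; split.
Qed.

Definition rsets (n r : nat) : {set {set 'I_n}} := [set S : {set 'I_n} | #|S| == r].

Definition kdom (n r k : nat) (F : {set {set 'I_n}}) :=
  forall S : {set 'I_n}, #|S| = r -> S \notin F ->
    k <= #|[set T in F | [disjoint S & T]]|.

Lemma dom_to_fam n r k (D : {set kneser_vertex n r}) :
  k_dominating (@kneser_adj n r) k D -> kdom r k (val @: D).
Proof.
move=> /forallP hD S hS hSF.
have hS' : #|S| == r by apply/eqP.
pose u : kneser_vertex n r := exist _ S hS'.
have huD : u \notin D.
  apply: contra hSF => hu; apply/imsetP; by exists u.
have := implyP (hD u) huD.
move/leq_trans; apply.
rewrite -(card_imset _ val_inj).
apply: subset_leq_card; apply/subsetP => T /imsetP [v].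
rewrite inE => /andP [hv hadj] ->.
rewrite inE; apply/andP; split; first by apply/imsetP; exists v.
exact: hadj.
Qed.

Lemma fam_to_dom n r k (F : {set {set 'I_n}}) :
  F \subset rsets n r -> kdom r k F ->
  k_dominating (@kneser_adj n r) k [set v | val v \in F] /\
  #|[set v : kneser_vertex n r | val v \in F]| = #|F|.
Proof.
move=> hFr hF.
have himg : val @: [set v : kneser_vertex n r | val v \in F] = F.
  apply/setP => S; apply/imsetP/idP.
    by move=> [v]; rewrite inE => hv ->.
  move=> hS.
  have hS' : #|S| == r by have := subsetP hFr S hS; rewrite inE.
  exists (exist _ S hS') => //; by rewrite inE.
split; last by rewrite -{2}himg card_imset //; exact: val_inj.
apply/forallP => u; apply/implyP; rewrite inE => hu.
have := hF (val u) (eqP (valP u)) hu.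
move/leq_trans; apply.
rewrite -[X in _ <= X](card_imset _ val_inj).
apply: subset_leq_card; apply/subsetP => T; rewrite inE => /andP [hT hdis].
have hT' : #|T| == r by have := subsetP hFr T hT; rewrite inE.
apply/imsetP; exists (exist _ T hT') => //.
rewrite inE; apply/andP; split; first by rewrite inE.
exact: hdis.
Qed.

Lemma exists_subset (T : finType) (A : {set T}) m :
  m <= #|A| -> exists B : {set T}, B \subset A /\ #|B| = m.
Proof.
elim: m => [|m IH] hm; first by exists set0; rewrite sub0set cards0.
have [B [hBA hB]] := IH (ltnW hm).
have : 0 < #|A :\: B| by rewrite cardsD (setIidPr hBA) hB subn_gt0.
case/card_gt0P => x; rewrite inE => /andP [hxB hxA].
exists (x |: B); split; first by rewrite subUset sub1set hxA hBA.
by rewrite cardsU1 hxB hB.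
Qed.

Lemma disjointP (T : finType) (A B : {set T}) :
  reflect (forall x, x \in A -> x \in B -> False) [disjoint A & B].
Proof.
apply: (iffP pred0P) => [h x hA hB | h x /=].
  by have := h x; rewrite /= hA hB.
by apply/negbTE/negP => /andP [hA hB]; exact: h x hA hB.
Qed.

Lemma addA_inj (T : finType) (A : {set T}) y y' :
  y \notin A -> y' \notin A -> y |: A = y' |: A -> y = y'.
Proof.
move=> hy hy' e.
have : y \in y' |: A by rewrite -e setU11.
rewrite in_setU1 => /orP [/eqP //|hA].
by rewrite hA in hy.
Qed.

Lemma card_compl n (B : {set 'I_n}) : #|~: B| = n - #|B|.
Proof. have := cardsC B; rewrite card_ord; lia. Qed.

Lemma card_setU_le (T : finType) (A B : {set T}) : #|A :|: B| <= #|A| + #|B|.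
Proof. by rewrite cardsU leq_subr. Qed.

Lemma nostar n r k (hr : 0 < r) (hk : 0 < k) (hn : 2 * (k + r) <= n)
  (F : {set {set 'I_n}}) :
  F \subset rsets n r -> kdom r k F ->
  (forall G : {set {set 'I_n}}, G \subset rsets n r -> kdom r k G -> #|F| <= #|G|) ->
  forall A : {set 'I_n}, #|A| = r.-1 -> exists y, y \notin A /\ y |: A \notin F.
Proof.
move=> hFr hF hmin A hA.
case: (boolP [exists y, (y \notin A) && (y |: A \notin F)]).
  by case/existsP => y /andP [h1 h2]; exists y.
move/existsPn => hno.
have H : forall y, y \notin A -> y |: A \in F.
  by move=> y hy; have := hno y; rewrite hy /= negbK.
exfalso.
have hcA := card_compl A.
have [Y [hYA hY]] : exists Y : {set 'I_n}, Y \subset ~: A /\ #|Y| = k.+1.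
  apply: exists_subset; lia.
pose Z := ~: (A :|: Y).
have hZ : n - (r.-1 + k.+1) <= #|Z|.
  rewrite /Z card_compl; have := card_setU_le A Y; lia.
have [W [hWZ hW]] : exists W : {set 'I_n}, W \subset Z /\ #|W| = r.-1.
  apply: exists_subset; lia.
pose Fnew := [set z |: W | z in Z :\: W].
have hFnew : #|Fnew| = #|Z| - r.-1.
  rewrite card_in_imset.
    by rewrite cardsD (setIidPr hWZ) hW.
  move=> z z'; rewrite !inE => /andP [h1 _] /andP [h2 _]; exact: addA_inj.
have [Fn [hFnF hFn]] : exists Fn : {set {set 'I_n}}, Fn \subset Fnew /\ #|Fn| = k.
  apply: exists_subset; rewrite hFnew; lia.
pose R := [set y |: A | y in Y].
have hR : #|R| = k.+1.
  rewrite card_in_imset // => y y' h1 h2; apply: addA_inj.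
    by have := subsetP hYA y h1; rewrite inE.
  by have := subsetP hYA y' h2; rewrite inE.
have hRF : R \subset F.
  apply/subsetP => T /imsetP [y hy ->]; apply: H.
  by have := subsetP hYA y hy; rewrite inE.
pose G := (F :\: R) :|: Fn.
have hGF : #|G| < #|F|.
  have h1 := card_setU_le (F :\: R) Fn.
  have h2 : #|F :\: R| = #|F| - #|R| by rewrite cardsD (setIidPr hRF).
  have h3 := subset_leq_card hRF.
  rewrite h2 hFn hR in h1; rewrite hR in h3; apply: leq_ltn_trans h1 _; have ltk : forall a b, b < a -> a - b.+1 + b < a by move=> a b; lia.
  exact: ltk _ _ h3.
have hGr : G \subset rsets n r.
  apply/subsetP => T; rewrite !inE => /orP [/andP [_ hT]|hT].
    by have := subsetP hFr T hT; rewrite inE.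
  have := subsetP hFnF T hT => /imsetP [z hz ->].
  move: hz; rewrite inE => /andP [hzW _].
  rewrite cardsU1 hzW hW /=; lia.
have hkG : kdom r k G.
  move=> S hS hSG.
  case: (boolP (S \in R)) => hSR.
    move: (hSR) => /imsetP [y hy hSy].
    rewrite -hFn; apply: subset_leq_card; apply/subsetP => T hT.
    rewrite inE; apply/andP; split; first by rewrite /G inE hT orbT.
    have := subsetP hFnF T hT => /imsetP [z hz ->].
    apply/disjointP => x hxS hxT.
    have hx1 : x \in A :|: Y.
      move: hxS; rewrite hSy in_setU1 => /orP [/eqP ->|hxA].
        by rewrite inE hy orbT.
      by rewrite inE hxA.
    have hx2 : x \in Z.
      move: hxT; rewrite in_setU1 => /orP [/eqP ->|hxW].
        by move: hz; rewrite inE => /andP [].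
      exact: subsetP hWZ x hxW.
    by move: hx2; rewrite /Z inE hx1.
  have hSF : S \notin F.
    apply: contra hSG => hSF; by rewrite /G !inE hSR hSF.
  case: (boolP [exists x, (x \in S) && (x \in A)]).
    case/existsP => x /andP [hxS hxA].
    apply: leq_trans (hF S hS hSF) _.
    apply: subset_leq_card; apply/subsetP => T; rewrite !inE => /andP [hT hdis].
    rewrite hdis andbT; apply/orP; left; rewrite hT andbT.
    apply/negP => /imsetP [y _ hTy].
    move/disjointP: hdis => /(_ x hxS); apply.
    by rewrite hTy inE hxA orbT.
  move/existsPn => hnx.
  pose X := [set y |: A | y in ~: (A :|: Y :|: S)].
  have hX : #|X| = n - #|A :|: Y :|: S|.
    rewrite card_in_imset ?card_compl // => y y'; rewrite !inE.
    rewrite !negb_or => /andP [/andP [h1 _] _] /andP [/andP [h2 _] _].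
    exact: addA_inj.
  have hU : #|A :|: Y :|: S| <= r.-1 + k.+1 + r.
    have := card_setU_le (A :|: Y) S; have := card_setU_le A Y; lia.
  apply: (@leq_trans #|X|); first by lia.
  apply: subset_leq_card; apply/subsetP => T /imsetP [y hy ->].
  move: hy; rewrite !inE !negb_or => /andP [/andP [hyA hyY] hyS].
  apply/andP; split.
    apply/orP; left; apply/andP; split; last exact: H.
    apply/negP => /imsetP [y' hy' e].
    have hy'A : y' \notin A by have := subsetP hYA y' hy'; rewrite inE.
    have := addA_inj hyA hy'A e => eq; by rewrite eq hy' in hyY.
  apply/disjointP => x hxS; rewrite in_setU1 => /orP [/eqP hxy|hxA].
    by rewrite -hxy hxS in hyS.
  by have := hnx x; rewrite hxS hxA.
have := hmin G hGr hkG; lia.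
Qed.

Definition wd n : 'I_n -> 'I_n.+1 := widen_ord (leqnSn n).
Definition lf n (S : {set 'I_n}) : {set 'I_n.+1} := @wd n @: S.

Lemma wd_inj n : injective (@wd n).
Proof. move=> a b e; apply: val_inj; exact: (congr1 val e). Qed.

Lemma lf_inj n : injective (@lf n).
Proof. exact: imset_inj (@wd_inj n). Qed.

Lemma card_lf n (S : {set 'I_n}) : #|lf S| = #|S|.
Proof. rewrite card_imset //; exact: wd_inj. Qed.

Lemma wd_neq_max n (j : 'I_n) : @wd n j != ord_max.
Proof. by rewrite -(inj_eq val_inj) /= neq_ltn ltn_ord. Qed.

Lemma wd_max n (i : 'I_n.+1) : i != ord_max -> exists j : 'I_n, i = @wd n j.
Proof.
move=> hi.
have hi' : (i : nat) != n.
  apply: contra hi => /eqP h; apply/eqP/val_inj; exact: h.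
have hlt : i < n by have := ltn_ord i; lia.
by exists (Ordinal hlt); apply: val_inj.
Qed.

Lemma lift_kdom n r k (hr : 0 < r) (hk : 0 < k) (hn : 2 * (k + r) <= n)
  (F : {set {set 'I_n}}) :
  F \subset rsets n r -> kdom r k F ->
  (forall G : {set {set 'I_n}}, G \subset rsets n r -> kdom r k G -> #|F| <= #|G|) ->
  kdom r k (@lf n @: F).
Proof.
move=> hFr hF hmin S' hS' hS'F.
pose pre := [set j : 'I_n | @wd n j \in S'].
have key : forall P T : {set 'I_n}, pre \subset P -> [disjoint P & T] ->
    [disjoint S' & lf T].
  move=> P T hP hPT; apply/disjointP => x hx /imsetP [t ht hxt].
  have htpre : t \in pre by rewrite inE -hxt.
  by move/disjointP: hPT => /(_ t (subsetP hP t htpre) ht).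
have gen : forall P : {set 'I_n}, pre \subset P -> #|P| = r -> P \notin F ->
    k <= #|[set T in @lf n @: F | [disjoint S' & T]]|.
  move=> P hP hPr hPF.
  apply: leq_trans (hF P hPr hPF) _.
  rewrite -(card_imset _ (@lf_inj n)).
  apply: subset_leq_card; apply/subsetP => T' /imsetP [T hTT ->].
  case/setIdP: hTT => hT hPT.
  rewrite inE; apply/andP; split; first by apply/imsetP; exists T.
  exact: key hPT.
case: (boolP (ord_max \in S')) => hmax.
  have hS'eq : S' = ord_max |: lf pre.
    apply/setP => i; rewrite in_setU1.
    case: (eqVneq i ord_max) => [->|hi]; first by rewrite hmax.
    have [j ->] := wd_max hi.
    by rewrite /lf mem_imset ?inE //; exact: wd_inj.
  have hpre : #|pre| = r.-1.
    move: hS'; rewrite hS'eq cardsU1 card_lf.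
    have -> : ord_max \notin lf pre.
      by apply/negP => /imsetP [j _ e]; move: (wd_neq_max j); rewrite -e eqxx.
    by move=> /= <-.
  have [y [hy hyF]] := nostar hr hk hn hFr hF hmin hpre.
  apply: (gen (y |: pre)); first by apply: subsetUr.
    by rewrite cardsU1 hy hpre /=; lia.
  exact: hyF.
have hS'eq : S' = lf pre.
  apply/setP => i.
  case: (eqVneq i ord_max) => [->|hi].
    rewrite (negbTE hmax); apply/esym/negP => /imsetP [j _ e].
    by move: (wd_neq_max j); rewrite -e eqxx.
  have [j ->] := wd_max hi.
  by rewrite /lf mem_imset ?inE //; exact: wd_inj.
apply: (gen pre) => //.
  by rewrite -card_lf -hS'eq.
apply: contra hS'F => hpF; rewrite hS'eq; apply/imsetP; by exists pre.
Qed.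

Theorem theorem2p3 (n r k : nat) (hr : 0 < r) (hk : 0 < k)
  (hnrk : 2 * (k + r) <= n) :
  gamma_k (@kneser_adj n.+1 r) k <= gamma_k (@kneser_adj n r) k.
Proof.
have [D0 [hD0 hg0 hmin0]] := gammaP (@kneser_adj n r) k.
have [D1 [hD1 hg1 hmin1]] := gammaP (@kneser_adj n.+1 r) k.
rewrite hg0 hg1.
pose F0 := val @: D0.
have hF0r : F0 \subset rsets n r.
  apply/subsetP => T /imsetP [v _ ->]; rewrite inE; exact: (valP v).
have hkF0 : kdom r k F0 := dom_to_fam hD0.
have hcF0 : #|F0| = #|D0| by rewrite card_imset //; exact: val_inj.
have hminF : forall G : {set {set 'I_n}}, G \subset rsets n r -> kdom r k G -> #|F0| <= #|G|.
  move=> G hGr hG; have [hd hc] := fam_to_dom hGr hG.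
  rewrite hcF0 -hc; exact: hmin0 _ hd.
pose F' := @lf n @: F0.
have hF'r : F' \subset rsets n.+1 r.
  apply/subsetP => T /imsetP [S hS ->]; rewrite inE card_lf.
  by have := subsetP hF0r S hS; rewrite inE.
have [hd hc] := fam_to_dom hF'r (lift_kdom hr hk hnrk hF0r hkF0 hminF).
apply: leq_trans (hmin1 _ hd) _.
rewrite hc card_imset; last exact: lf_inj.
by rewrite hcF0.
Qed.
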